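(* Let $p\ge 2$ and let $\mathbb{F}_p$ be a binary floating-point format with $p$-bit significands and unit roundoff $u=2^{-p}$. Let $t\ge 1$ and $s_A,s_B\ge 1$ be integers. Let $A\in\mathbb{F}_p^{m\times k}$ and $B\in\mathbb{F}_p^{k\times n}$ have all entries nonzero. Define the scale factors $\alpha\in\mathbb{R}^m$, $\beta\in\mathbb{R}^n$ and the integer slices $A_{(\ell)}$ ($1\le \ell\le s_A$) and $B^{(h)}$ ($1\le h\le s_B$) as in the context, and put $$\tilde C=\alpha\beta^T\circ\sum_{\ell=1}^{s_A}\sum_{h=1}^{s_B}2^{-(\ell+h)t}A_{(\ell)}B^{(h)} .$$ Suppose $\hat C$ is computed as follows: each integer product $A_{(\ell)}B^{(h)}$ is computed exactly, converted exactly to $\mathbb{F}_p$ and scaled exactly by $2^{-(\ell+h)t}$ and by $\alpha\beta^T$ (entrywise), and then the resulting $\psi=s_As_B$ matrices are added entrywise in floating-point arithmetic (in any order) obeying the standard model $\mathrm{fl}(x+y)=(x+y)(1+\delta)$, $|\delta|\le u$, with no overflow or underflow, and $\psi u<1$. Then, entrywise, $$|\hat C-AB|\le\bigl(\zeta_{A,B}+\gamma_{\psi-1}(1+\zeta_{A,B})\bigr)\,|A|\,|B|,$$ where $\zeta_{A,B}=2^{-s_At}\kappa_A+2^{-s_Bt}\kappa_B+2^{-(s_A+s_B)t}\kappa_A\kappa_B$ and $\gamma_j=ju/(1-ju)$.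
   Context: Absolute values of matrices and inequalities between matrices are entrywise; $\circ$ is the Hadamard (entrywise) product. For $x\in\mathbb{R}$, $[x]$ denotes truncation toward zero ($\lfloor x\rfloor$ if $x\ge0$, $\lceil x\rceil$ if $x<0$). Scale factors: $\alpha_i$ is the smallest power of two strictly larger than $M_i=\max_{1\le j\le k}|a_{ij}|$ (i.e. $\alpha_i=2^{\lfloor\log_2 M_i\rfloor+1}$), and $\beta_j$ is the smallest power of two strictly larger than $N_j=\max_{1\le i\le k}|b_{ij}|$. Slices: $A_{(\ell)}=\bigl[2^{\ell t}\bigl(\mathrm{diag}(\alpha)^{-1}A-\sum_{r=1}^{\ell-1}2^{-rt}A_{(r)}\bigr)\bigr]$ for $\ell=1,\dots,s_A$, and $B^{(h)}=\bigl[2^{ht}\bigl(B\,\mathrm{diag}(\beta)^{-1}-\sum_{r=1}^{h-1}2^{-rt}B^{(r)}\bigr)\bigr]$ for $h=1,\dots,s_B$ (integer matrices, applied entrywise). Scaling measures: $\kappa_A=2\max_i\frac{\max_j|a_{ij}|}{\min_j|a_{ij}|}$ and $\kappa_B=2\max_j\frac{\max_i|b_{ij}|}{\min_i|b_{ij}|}$. *)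

(* Defs.v *)
From HB Require Import structures.
From mathcomp Require Import all_boot all_order all_algebra.
From mathcomp Require Import reals exp.
Set Implicit Arguments. Unset Strict Implicit. Unset Printing Implicit Defensive.
Import Order.TTheory GRing.Theory Num.Theory.
Local Open Scope ring_scope.

Section Defs.
Variable R : realType.

(* binary floating-point format with p-bit significands, unbounded exponent
   (no overflow/underflow) *)
Definition is_fp (p : nat) (x : R) : Prop :=
  exists (M e : int), x = M%:~R * (2 : R) ^ e /\ (`|M| < 2 ^+ p)%R.

Definition trunc0 (x : R) : int :=
  if 0 <= x then Num.floor x else Num.ceil x.

Definition pow2above (M : R) : R :=
  (2 : R) ^ (Num.floor (ln M / ln 2) + 1).

Fixpoint slices (t : nat) (x : R) (l : nat) : seq int :=
  match l with
  | 0 => [::]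
  | l'.+1 =>
      let s := slices t x l' in
      rcons s (trunc0 ((2 : R) ^+ (l'.+1 * t) *
        (x - \sum_(r < l') (2 : R) ^- (r.+1 * t) * (nth 0 s r)%:~R)))
  end.

(* the l-th slice (l >= 1) *)
Definition slice (t : nat) (x : R) (l : nat) : int := nth 0 (slices t x l) l.-1.

Variables m k n : nat.

Definition rowmaxA (A : 'M[R]_(m, k)) (i : 'I_m) : R :=
  \big[Num.max/0]_(j < k) `|A i j|.
Definition rowminA (A : 'M[R]_(m, k)) (i : 'I_m) : R :=
  \big[Num.min/rowmaxA A i]_(j < k) `|A i j|.
Definition colmaxB (B : 'M[R]_(k, n)) (j : 'I_n) : R :=
  \big[Num.max/0]_(i < k) `|B i j|.
Definition colminB (B : 'M[R]_(k, n)) (j : 'I_n) : R :=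
  \big[Num.min/colmaxB B j]_(i < k) `|B i j|.

Definition alphaA (A : 'M[R]_(m, k)) (i : 'I_m) : R := pow2above (rowmaxA A i).
Definition betaB (B : 'M[R]_(k, n)) (j : 'I_n) : R := pow2above (colmaxB B j).

Definition kappaA (A : 'M[R]_(m, k)) : R :=
  2 * \big[Num.max/0]_(i < m) (rowmaxA A i / rowminA A i).
Definition kappaB (B : 'M[R]_(k, n)) : R :=
  2 * \big[Num.max/0]_(j < n) (colmaxB B j / colminB B j).

(* A_(l) = slices of diag(alpha)^{-1} A ; B^(h) = slices of B diag(beta)^{-1} *)
Definition sliceA (t : nat) (A : 'M[R]_(m, k)) (l : nat) : 'M[R]_(m, k) :=
  \matrix_(i, j) (slice t (A i j / alphaA A i) l)%:~R.
Definition sliceB (t : nat) (B : 'M[R]_(k, n)) (h : nat) : 'M[R]_(k, n) :=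
  \matrix_(i, j) (slice t (B i j / betaB B j) h)%:~R.

(* the psi = sA*sB exactly computed, exactly scaled terms for entry (i,j) *)
Definition terms (t sA sB : nat) (A : 'M[R]_(m, k)) (B : 'M[R]_(k, n))
    (i : 'I_m) (j : 'I_n) : seq R :=
  [seq alphaA A i * betaB B j * (2 : R) ^- ((l + h) * t)
         * (sliceA t A l *m sliceB t B h) i j
     | l <- iota 1 sA, h <- iota 1 sB].

End Defs.

(* fl_sum u xs r : r is a possible result of summing the terms xs in
   floating-point arithmetic, in any order (any summation tree over any
   permutation), each addition satisfying fl(x+y) = (x+y)(1+d), |d| <= u. *)
Inductive fl_sum {R : realType} (u : R) : seq R -> R -> Prop :=
| fl_sum_leaf x : fl_sum u [:: x] x
| fl_sum_node xs ys a b d :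
    fl_sum u xs a -> fl_sum u ys b -> `|d| <= u ->
    fl_sum u (xs ++ ys) ((a + b) * (1 + d))
| fl_sum_perm xs ys r : perm_eq xs ys -> fl_sum u xs r -> fl_sum u ys r.

Definition gamma {R : realType} (u : R) (j : nat) : R :=
  (j%:R * u) / (1 - j%:R * u).

(* Main.v *)
Require Import Defs.
From HB Require Import structures.
From mathcomp Require Import all_boot all_order all_algebra.
From mathcomp Require Import reals exp.
From mathcomp Require Import ring lra.
Import Order.TTheory GRing.Theory Num.Theory.
Local Open Scope ring_scope.

Lemma pow2above_pos (R : realType) (M : R) : 0 < pow2above M.
Proof. by rewrite /pow2above exprz_gt0. Qed.

Lemma pow2z_le (R : realType) (M : R) (z : int) :
  0 < M -> z%:~R <= ln M / ln 2 -> (2 : R) ^ z <= M.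
Proof.
move=> M0 hz.
have l2 : 0 < ln (2 : R) by rewrite ln_gt0 // ltr1n.
have hz' : z%:~R * ln 2 <= ln M by rewrite -ler_pdivlMr.
have p2 : 0 < (2 : R) ^ z by rewrite exprz_gt0.
rewrite -ler_ln ?posrE //.
apply: le_trans hz'.
case: z {hz p2} => n.
- by rewrite lnXn // mulr_natl.
- rewrite NegzE -invr_expz; change ((2:R) ^ (n.+1)%:Z) with ((2:R) ^+ n.+1); rewrite lnV ?posrE ?exprn_gt0 // lnXn //.
  by rewrite mulrNz mulNr mulr_natl.
Qed.

Lemma pow2above_le (R : realType) (M : R) : 0 < M -> pow2above M <= 2 * M.
Proof.
move=> M0; rewrite /pow2above expfzDr ?pnatr_eq0 // expr1z mulrC ler_pM2l //.
by apply: pow2z_le => //; apply: floor_le.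
Qed.
Lemma trunc0_spec (R : realType) (z : R) :
  `|(Defs.trunc0 z)%:~R| + `|z - (Defs.trunc0 z)%:~R| = `|z| /\ `|z - (Defs.trunc0 z)%:~R| <= 1.
Proof.
rewrite /Defs.trunc0; case: ifP => hz.
- have /andP[h1 h2] := floor_itv z.
  have f0 : (0 : R) <= (Num.floor z)%:~R by rewrite ler0z floor_ge0.
  rewrite intrD in h2.
  rewrite (ger0_norm f0) (ger0_norm hz) ger0_norm ?subr_ge0 //.
  split; first by ring.
  lra.
- have hz' : z < 0 by rewrite ltNge hz.
  have /andP[h1 h2] := ceil_itv z.
  have f0 : (Num.ceil z)%:~R <= (0 : R) by rewrite lerz0 ceil_le0 ltW.
  rewrite intrB in h1.
  rewrite (ler0_norm f0) (ltr0_norm hz') ler0_norm ?subr_le0 //.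
  split; first by ring.
  lra.
Qed.

Lemma size_slices (R : realType) t (x : R) l : size (slices t x l) = l.
Proof. by elim: l => //= l IH; rewrite size_rcons IH. Qed.

Lemma nth_slices (R : realType) t (x : R) l r :
  (r < l)%N -> nth 0 (slices t x l) r = slice t x r.+1.
Proof.
elim: l => // l IH; rewrite ltnS leq_eqVlt => /orP[/eqP ->|hr].
  by rewrite /slice.
rewrite /= nth_rcons size_slices hr; exact: IH.
Qed.

Lemma slice_rec (R : realType) t (x : R) l :
  slice t x l.+1 = Defs.trunc0 ((2 : R) ^+ (l.+1 * t) *
     (x - \sum_(r < l) (2 : R) ^- (r.+1 * t) * (slice t x r.+1)%:~R)).
Proof.
rewrite /slice /= nth_rcons size_slices ltnn eqxx.
congr (Defs.trunc0 (_ * (_ - _))); apply: eq_bigr => r _.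
by rewrite nth_slices.
Qed.

Definition Ssum {R : realType} t (x : R) l :=
  \sum_(r < l) (2 : R) ^- (r.+1 * t) * `|(slice t x r.+1)%:~R|.
Definition Tsum {R : realType} t (x : R) l :=
  \sum_(r < l) (2 : R) ^- (r.+1 * t) * (slice t x r.+1)%:~R.

Lemma slice_inv (R : realType) t (x : R) l :
  Ssum t x l + `|x - Tsum t x l| = `|x| /\
  ((0 < l)%N -> `|x - Tsum t x l| <= (2 : R) ^- (l * t)).
Proof.
elim: l => [|l [IH1 _]].
  by rewrite /Ssum /Tsum !big_ord0 subr0 add0r.
have hq := slice_rec R t x l; rewrite -/(Tsum t x l) in hq.
set N := (l.+1 * t)%N in hq *.
set z := (2 : R) ^+ N * (x - Tsum t x l) in hq.
have [s1 s2] := trunc0_spec R z; rewrite -hq in s1 s2.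
set q := slice t x l.+1 in hq s1 s2.
have w0 : 0 < (2 : R) ^- N by rewrite invr_gt0 exprn_gt0.
have wN : (2 : R) ^- N * 2 ^+ N = 1 by rewrite mulVf // expf_neq0 // pnatr_eq0.
have e : x - Tsum t x l.+1 = (2 : R) ^- N * (z - q%:~R).
  rewrite /Tsum big_ord_recr /= -/(Tsum t x l) /z mulrBr mulrA wN; ring.
have ea : `|x - Tsum t x l| = (2 : R) ^- N * `|z|.
  by rewrite /z normrM (gtr0_norm (exprn_gt0 _ _)) // mulrA wN mul1r.
rewrite e normrM (gtr0_norm w0); split.
  rewrite /Ssum big_ord_recr /= -/(Ssum t x l) -IH1 ea -s1; ring.
by move=> _; rewrite -[X in _ <= X]mulr1 ler_pM2l.
Qed.
Lemma gammaE (R : realType) (u : R) j : j%:R * u < 1 ->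
  gamma u j = (1 - j%:R * u)^-1 - 1.
Proof.
move=> h; rewrite /gamma; have h0 : 1 - j%:R * u != 0 by rewrite subr_eq0 gt_eqF.
by field.
Qed.

Lemma gamma_ge0 (R : realType) (u : R) j : 0 <= u -> j%:R * u < 1 -> 0 <= gamma u j.
Proof.
move=> u0 h; rewrite /gamma divr_ge0 ?mulr_ge0 //; lra.
Qed.

Lemma gamma_mono (R : realType) (u : R) j j' : 0 <= u -> (j <= j')%N ->
  j'%:R * u < 1 -> gamma u j <= gamma u j'.
Proof.
move=> u0 jj h.
have hj : j%:R * u <= j'%:R * u by rewrite ler_wpM2r // ler_nat.
have h' : j%:R * u < 1 by apply: le_lt_trans h.
rewrite !gammaE // lerD2r lef_pV2 ?posrE; lra.
Qed.

Lemma gamma_step (R : realType) (u : R) j : 0 <= u -> j.+1%:R * u < 1 ->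
  gamma u j + u * (1 + gamma u j) <= gamma u j.+1.
Proof.
move=> u0 h.
have h' : j%:R * u < 1.
  apply: le_lt_trans h; rewrite ler_wpM2r // ler_nat //.
rewrite !gammaE //.
rewrite -[j.+1]addn1 natrD in h *.
have a0 : 0 < 1 - j%:R * u by lra.
have b0 : 0 < 1 - (j%:R + 1) * u by lra.
have -> : (1 - j%:R * u)^-1 - 1 + u * (1 + ((1 - j%:R * u)^-1 - 1)) =
  (1 + u) / (1 - j%:R * u) - 1 by field; rewrite gt_eqF.
rewrite lerD2r ler_pdivrMr // mulrC ler_pdivlMr //.
have : 0 <= (j%:R + 1) * u * u by rewrite !mulr_ge0 // addr_ge0.
nra.
Qed.

Lemma fl_sum_size {R : realType} {u : R} {xs c} : fl_sum u xs c -> (0 < size xs)%N.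
Proof.
elim => //= [xs1 ys a b d _ h1 _ h2 _|xs1 ys r hp _ h]; first by rewrite size_cat addn_gt0 h1.
by rewrite -(perm_size hp).
Qed.

Lemma fl_sum_err (R : realType) (u : R) xs c : fl_sum u xs c -> 0 <= u ->
  (size xs).-1%:R * u < 1 ->
  `|c - \sum_(x <- xs) x| <= gamma u (size xs).-1 * \sum_(x <- xs) `|x|.
Proof.
move=> H u0; elim: H; clear xs c.
- by move=> x hs; rewrite !big_seq1 subrr normr0 mulr_ge0 // gamma_ge0.
- move=> xs ys a b d Hx IHx Hy IHy du hs.
  have sx := fl_sum_size Hx; have sy := fl_sum_size Hy.
  rewrite size_cat in hs *.
  set n1 := size xs in sx IHx hs *; set n2 := size ys in sy IHy hs *.
  have le1 : (n1 <= (n1 + n2).-1)%N by rewrite -subn1 -addnBA // leq_addr.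
  have le2 : (n2 <= (n1 + n2).-1)%N by rewrite -subn1 -addnBAC // leq_addl.
  have hn1 : n1%:R * u < 1 by apply: le_lt_trans hs; rewrite ler_wpM2r // ler_nat.
  have hn2 : n2%:R * u < 1 by apply: le_lt_trans hs; rewrite ler_wpM2r // ler_nat.
  have hn1' : n1.-1%:R * u < 1 by apply: le_lt_trans hn1; rewrite ler_wpM2r // ler_nat leq_pred.
  have hn2' : n2.-1%:R * u < 1 by apply: le_lt_trans hn2; rewrite ler_wpM2r // ler_nat leq_pred.
  have e1 := IHx hn1'; have e2 := IHy hn2'.
  set X := \sum_(x <- xs) x in e1; set Y := \sum_(x <- ys) x in e2.
  set X' := \sum_(x <- xs) `|x| in e1; set Y' := \sum_(x <- ys) `|x| in e2.
  rewrite big_cat big_cat /= -/X -/Y -/X' -/Y'.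
  set g1 := gamma u n1.-1 in e1; set g2 := gamma u n2.-1 in e2.
  set g := gamma u (n1 + n2).-1.
  have g10 : 0 <= g1 by apply: gamma_ge0.
  have g20 : 0 <= g2 by apply: gamma_ge0.
  have hX : `|X| <= X' by apply: ler_norm_sum.
  have hY : `|Y| <= Y' by apply: ler_norm_sum.
  have X0 : 0 <= X' by apply: le_trans hX.
  have Y0 : 0 <= Y' by apply: le_trans hY.
  have st1 : g1 + u * (1 + g1) <= g.
    have := @gamma_step R u n1.-1 u0; rewrite prednK // => /(_ hn1) H.
    by apply: le_trans H _; apply: gamma_mono.
  have st2 : g2 + u * (1 + g2) <= g.
    have := @gamma_step R u n2.-1 u0; rewrite prednK // => /(_ hn2) H.
    by apply: le_trans H _; apply: gamma_mono.
  have ha : `|a| <= (1 + g1) * X'.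
    have : `|a| <= `|a - X| + `|X| by rewrite -[X in `|X| <= _](subrK X) ler_normD.
    lra.
  have hb : `|b| <= (1 + g2) * Y'.
    have : `|b| <= `|b - Y| + `|Y| by rewrite -[X in `|X| <= _](subrK Y) ler_normD.
    lra.
  have -> : (a + b) * (1 + d) - (X + Y) = (a - X) + (b - Y) + d * (a + b) by ring.
  have hd : `|d * (a + b)| <= u * ((1 + g1) * X' + (1 + g2) * Y').
    rewrite normrM; apply: ler_pM => //; apply: le_trans (ler_normD _ _) _.
    exact: lerD.
  apply: le_trans (ler_normD _ _) _.
  apply: le_trans (lerD (ler_normD _ _) hd) _.
  have : (g1 + u * (1 + g1)) * X' <= g * X' by apply: ler_wpM2r.
  have : (g2 + u * (1 + g2)) * Y' <= g * Y' by apply: ler_wpM2r.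
  nra.
- move=> xs ys r hp _ IH hs.
  rewrite -(perm_big _ hp) -(perm_big _ hp) /= -(perm_size hp).
  by apply: IH; rewrite (perm_size hp).
Qed.
Lemma sum_iota1 (R : realType) (F : nat -> R) s :
  \sum_(l <- iota 1 s) F l = \sum_(r < s) F r.+1.
Proof.
by rewrite -[1%N]addn0 iotaDl big_map -(big_mkord xpredT (fun r => F r.+1)) /index_iota subn0.
Qed.

Lemma sum_sep (R : realType) (sA sB k : nat) (K : R) (wa wb : nat -> R)
   (f g : nat -> 'I_k -> R) :
  \sum_(r < sA) \sum_(r' < sB) K * (wa r * wb r') * \sum_(q < k) f r q * g r' q =
  K * \sum_(q < k) (\sum_(r < sA) wa r * f r q) * (\sum_(r' < sB) wb r' * g r' q).
Proof.
have -> : \sum_(r < sA) \sum_(r' < sB) K * (wa r * wb r') * \sum_(q < k) f r q * g r' q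
  = \sum_(r < sA) \sum_(r' < sB) \sum_(q < k) K * (wa r * f r q) * (wb r' * g r' q).
  apply: eq_bigr => r _; apply: eq_bigr => r' _; rewrite mulr_sumr.
  by apply: eq_bigr => q _; ring.
rewrite mulr_sumr.
under eq_bigr do rewrite exchange_big /=.
rewrite exchange_big /=.
apply: eq_bigr => q _.
rewrite big_distrl mulr_sumr; apply: eq_bigr => r _ /=.
rewrite big_distrr mulr_sumr; apply: eq_bigr => r' _ /=.
ring.
Qed.

Lemma kappaA_bound (R : realType) m k (A : 'M[R]_(m, k)) i q :
  (forall i j, A i j != 0) ->
  2 * rowmaxA A i <= kappaA A * `|A i q| /\ 0 < rowmaxA A i /\ 0 <= kappaA A.
Proof.
move=> nz.
have aq : 0 < `|A i q| by rewrite normr_gt0.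
have Mq : `|A i q| <= rowmaxA A i by rewrite /rowmaxA; apply: le_bigmax.
have M0 : 0 < rowmaxA A i by apply: lt_le_trans Mq.
have m0 : 0 < rowminA A i.
  rewrite /rowminA; elim/big_ind: _ => //.
    by move=> x y x0 y0; rewrite lt_min x0.
  by move=> j _; rewrite normr_gt0.
have mq : rowminA A i <= `|A i q| by rewrite /rowminA; apply: bigmin_le.
have kb : 2 * (rowmaxA A i / rowminA A i) <= kappaA A.
  by rewrite /kappaA ler_pM2l //; apply: le_bigmax.
have k0 : 0 <= kappaA A.
  apply: le_trans kb; apply: mulr_ge0 => //; apply: divr_ge0; exact: ltW.
split=> //.
have e : 2 * rowmaxA A i = 2 * (rowmaxA A i / rowminA A i) * rowminA A i.
  by rewrite -mulrA divfK // gt_eqF.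
rewrite e; apply: le_trans (ler_wpM2r (ltW m0) kb) _.
exact: ler_wpM2l.
Qed.

Lemma kappaB_bound (R : realType) k n (B : 'M[R]_(k, n)) q j :
  (forall i j, B i j != 0) ->
  2 * colmaxB B j <= kappaB B * `|B q j| /\ 0 < colmaxB B j /\ 0 <= kappaB B.
Proof.
move=> nz.
have aq : 0 < `|B q j| by rewrite normr_gt0.
have Mq : `|B q j| <= colmaxB B j by rewrite /colmaxB; apply: le_bigmax.
have M0 : 0 < colmaxB B j by apply: lt_le_trans Mq.
have m0 : 0 < colminB B j.
  rewrite /colminB; elim/big_ind: _ => //.
    by move=> x y x0 y0; rewrite lt_min x0.
  by move=> i _; rewrite normr_gt0.
have mq : colminB B j <= `|B q j| by rewrite /colminB; apply: bigmin_le.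
have kb : 2 * (colmaxB B j / colminB B j) <= kappaB B.
  by rewrite /kappaB ler_pM2l //; apply: le_bigmax.
have k0 : 0 <= kappaB B.
  apply: le_trans kb; apply: mulr_ge0 => //; apply: divr_ge0; exact: ltW.
split=> //.
have e : 2 * colmaxB B j = 2 * (colmaxB B j / colminB B j) * colminB B j.
  by rewrite -mulrA divfK // gt_eqF.
rewrite e; apply: le_trans (ler_wpM2r (ltW m0) kb) _.
exact: ler_wpM2l.
Qed.

Lemma sum_iota2 (R : realType) (F : nat -> nat -> R) a b :
  \sum_(l <- iota 1 a) \sum_(h <- iota 1 b) F l h =
  \sum_(r < a) \sum_(r' < b) F r.+1 r'.+1.
Proof.
rewrite sum_iota1; apply: eq_bigr => r _; exact: sum_iota1.
Qed.

Theorem mainTheorem1 (R : realType) (p t sA sB m k n : nat)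
  (A : 'M[R]_(m, k)) (B : 'M[R]_(k, n)) (u : R) :
  (2 <= p)%N -> (1 <= t)%N -> (1 <= sA)%N -> (1 <= sB)%N ->
  u = (2 : R) ^- p ->
  (forall i j, is_fp p (A i j)) -> (forall i j, is_fp p (B i j)) ->
  (forall i j, A i j != 0) -> (forall i j, B i j != 0) ->
  (sA * sB)%:R * u < 1 ->
  let psi := (sA * sB)%N in
  let zeta := (2 : R) ^- (sA * t) * kappaA A + (2 : R) ^- (sB * t) * kappaB B
              + (2 : R) ^- ((sA + sB) * t) * kappaA A * kappaB B in
  forall (i : 'I_m) (j : 'I_n) (c : R),
    fl_sum u (terms t sA sB A B i j) c ->
    `|c - (A *m B) i j| <=
      (zeta + gamma u (psi - 1) * (1 + zeta)) *
      ((map_mx (fun x => `|x|) A) *m (map_mx (fun x => `|x|) B)) i j.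
Proof.
move=> hp ht hsA hsB hu _ _ nzA nzB hpsi psi zeta i j c Hc.
have u0 : 0 <= u by rewrite hu invr_ge0 exprn_ge0.
set al := alphaA A i; set be := betaB B j.
set x := fun q => A i q / al.
set y := fun q => B q j / be.
set TA := fun q => Tsum t (x q) sA; set TB := fun q => Tsum t (y q) sB.
set SA := fun q => Ssum t (x q) sA; set SB := fun q => Ssum t (y q) sB.
set P := ((map_mx (fun x => `|x|) A) *m (map_mx (fun x => `|x|) B)) i j.
have PE : P = \sum_q `|A i q| * `|B q j|.
  by rewrite /P mxE; apply: eq_bigr => q _; rewrite !mxE.
set ts := terms t sA sB A B i j.
have al0 : 0 < al by apply: pow2above_pos.
have be0 : 0 < be by apply: pow2above_pos.
set wa := fun r : nat => (2 : R) ^- (r.+1 * t).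
set f := fun r (q : 'I_k) => ((slice t (x q) r.+1)%:~R : R).
set g := fun r (q : 'I_k) => ((slice t (y q) r.+1)%:~R : R).
have termE : forall r r', al * be * 2 ^- ((r.+1 + r'.+1) * t) *
     (sliceA t A r.+1 *m sliceB t B r'.+1) i j =
     al * be * (wa r * wa r') * \sum_q f r q * g r' q.
  move=> r r'; rewrite mxE mulnDl exprD invfM.
  congr (_ * _); apply: eq_bigr => q _; by rewrite !mxE.
have tsE : \sum_(z <- ts) z = al * be * \sum_q TA q * TB q.
  rewrite /ts /terms big_allpairs_dep /= sum_iota2.
  rewrite (_ : \sum_q TA q * TB q = \sum_q (\sum_(r < sA) wa r * f r q) * (\sum_(r' < sB) wa r' * g r' q)) //.
  rewrite -sum_sep; apply: eq_bigr => r _; apply: eq_bigr => r' _; exact: termE.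
have tsA : \sum_(z <- ts) `|z| <= al * be * \sum_q SA q * SB q.
  rewrite /ts /terms big_allpairs_dep /= sum_iota2.
  apply: le_trans (_ : _ <= \sum_(r < sA) \sum_(r' < sB) al * be * (wa r * wa r') *
     \sum_q `|f r q| * `|g r' q|) _.
    apply: ler_sum => r _; apply: ler_sum => r' _; rewrite termE.
    have w0 : 0 <= al * be * (wa r * wa r').
      by rewrite /wa !mulr_ge0 ?ltW // invr_gt0 exprn_gt0.
    rewrite normrM (ger0_norm w0) ler_wpM2l //.
    apply: le_trans (ler_norm_sum _ _ _) _.
    by apply: ler_sum => q _; rewrite normrM.
  rewrite (sum_sep R sA sB k (al * be) wa wa (fun r q => `|f r q|) (fun r q => `|g r q|)).
  exact: lexx.
have sz : size ts = psi by rewrite /ts /terms size_allpairs !size_iota.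
have hpsi' : (size ts).-1%:R * u < 1.
  rewrite sz; apply: le_lt_trans hpsi; rewrite ler_wpM2r // ler_nat leq_pred //.
have e1 := fl_sum_err R u ts c Hc u0 hpsi'.
rewrite sz -subn1 in e1.
have g0 : 0 <= gamma u (psi - 1).
  by apply: gamma_ge0 => //; rewrite -sz subn1.
have x_le : forall q, al * SA q <= `|A i q|.
  move=> q; have [h _] := slice_inv R t (x q) sA.
  have : SA q <= `|x q| by rewrite -h lerDl.
  rewrite /x normrM normfV (gtr0_norm al0) => H.
  by rewrite -(divfK (lt0r_neq0 al0) `|A i q|) mulrC ler_wpM2r // ltW.
have y_le : forall q, be * SB q <= `|B q j|.
  move=> q; have [h _] := slice_inv R t (y q) sB.
  have : SB q <= `|y q| by rewrite -h lerDl.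
  rewrite /y normrM normfV (gtr0_norm be0) => H.
  by rewrite -(divfK (lt0r_neq0 be0) `|B q j|) mulrC ler_wpM2r // ltW.
have SA0 : forall q, 0 <= SA q.
  by move=> q; rewrite /SA /Ssum sumr_ge0 // => r _; rewrite mulr_ge0 // invr_ge0 exprn_ge0.
have SB0 : forall q, 0 <= SB q.
  by move=> q; rewrite /SB /Ssum sumr_ge0 // => r _; rewrite mulr_ge0 // invr_ge0 exprn_ge0.
have SP : al * be * \sum_q SA q * SB q <= P.
  rewrite PE mulr_sumr; apply: ler_sum => q _.
  rewrite (_ : al * be * (SA q * SB q) = (al * SA q) * (be * SB q)); last by ring.
  by apply: ler_pM; [exact: mulr_ge0 (ltW al0) (SA0 q)|exact: mulr_ge0 (ltW be0) (SB0 q)|exact: x_le|exact: y_le].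
have P0 : 0 <= P by rewrite PE sumr_ge0 // => q _; rewrite mulr_ge0.
have hk := fun q => kappaA_bound R m k A i q nzA.
have hkB := fun q => kappaB_bound R k n B q j nzB.
set eA := (2 : R) ^- (sA * t); set eB := (2 : R) ^- (sB * t).
have eA0 : 0 <= eA by rewrite invr_ge0 exprn_ge0.
have eB0 : 0 <= eB by rewrite invr_ge0 exprn_ge0.
have eAB : (2 : R) ^- ((sA + sB) * t) = eA * eB by rewrite mulnDl exprD invfM.
have errA : forall q, `|A i q - al * TA q| <= eA * kappaA A * `|A i q|.
  move=> q; have [k1 [k2 k3]] := hk q.
  have [_ h] := slice_inv R t (x q) sA.
  have h' : `|x q - TA q| <= eA by exact: h.
  have -> : A i q - al * TA q = al * (x q - TA q).
    by rewrite /x mulrBr mulrCA divff ?mulr1 // lt0r_neq0.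
  rewrite normrM (gtr0_norm al0).
  have hal : al <= 2 * rowmaxA A i by apply: pow2above_le.
  apply: le_trans (_ : al * eA <= _).
    by rewrite ler_wpM2l // ltW.
  rewrite -mulrA [X in X <= _]mulrC ler_wpM2l //.
  exact: le_trans hal k1.
have errB : forall q, `|B q j - be * TB q| <= eB * kappaB B * `|B q j|.
  move=> q; have [k1 [k2 k3]] := hkB q.
  have [_ h] := slice_inv R t (y q) sB.
  have h' : `|y q - TB q| <= eB by exact: h.
  have -> : B q j - be * TB q = be * (y q - TB q).
    by rewrite /y mulrBr mulrCA divff ?mulr1 // lt0r_neq0.
  rewrite normrM (gtr0_norm be0).
  have hbe : be <= 2 * colmaxB B j by apply: pow2above_le.
  apply: le_trans (_ : be * eB <= _).
    by rewrite ler_wpM2l // ltW.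
  rewrite -mulrA [X in X <= _]mulrC ler_wpM2l //.
  exact: le_trans hbe k1.
have kA0 : 0 <= kappaA A.
  by rewrite /kappaA mulr_ge0 // bigmax_ge_id.
have kB0 : 0 <= kappaB B.
  by rewrite /kappaB mulr_ge0 // bigmax_ge_id.
have zeta0 : 0 <= zeta.
  have h1 := mulr_ge0 eA0 kA0; have h2 := mulr_ge0 eB0 kB0.
  have h3 := mulr_ge0 (mulr_ge0 (mulr_ge0 eA0 eB0) kA0) kB0.
  rewrite /zeta eAB -/eA -/eB; lra.
have e2 : `|\sum_(z <- ts) z - (A *m B) i j| <= zeta * P.
  rewrite tsE mxE mulr_sumr -sumrB.
  apply: le_trans (ler_norm_sum _ _ _) _.
  rewrite PE mulr_sumr; apply: ler_sum => q _.
  have hA := errA q; have hB := errB q.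
  set a := A i q in hA *; set b := B q j in hB *.
  set ea := a - al * TA q in hA; set eb := b - be * TB q in hB.
  have -> : al * be * (TA q * TB q) - a * b = - (ea * b) - a * eb + ea * eb.
    by rewrite /ea /eb; ring.
  apply: le_trans (ler_normD _ _) _.
  apply: le_trans (lerD (ler_normB _ _) (lexx _)) _.
  rewrite !normrN !normrM.
  have ea0 : 0 <= `|ea| by [].
  have eb0 : 0 <= `|eb| by [].
  have f1 : `|ea| * `|b| <= eA * kappaA A * `|a| * `|b| by rewrite ler_wpM2r.
  have f2 : `|a| * `|eb| <= `|a| * (eB * kappaB B * `|b|) by rewrite ler_wpM2l.
  have f3 : `|ea| * `|eb| <= (eA * kappaA A * `|a|) * (eB * kappaB B * `|b|).
    by apply: ler_pM.
  rewrite /zeta eAB -/eA -/eB.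
  nra.
have e3 : `|c - (A *m B) i j| <= gamma u (psi - 1) * P + zeta * P.
  apply: le_trans (_ : `|c - \sum_(z <- ts) z| + `|\sum_(z <- ts) z - (A *m B) i j| <= _).
    rewrite (_ : c - (A *m B) i j = (c - \sum_(z <- ts) z) + (\sum_(z <- ts) z - (A *m B) i j)).
      exact: ler_normD.
    by ring.
  apply: lerD => //; apply: le_trans e1 _; apply: ler_wpM2l => //.
  exact: le_trans tsA SP.
apply: le_trans e3 _.
have : gamma u (psi - 1) * P <= gamma u (psi - 1) * P * (1 + zeta).
  by rewrite ler_peMr ?(mulr_ge0 g0 P0) // lerDl.
nra.
Qed.
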